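(* Let $\gamma:[0,1]\to\mathbb{R}^2$ be a $C^1$ curve of constant speed $c>0$ with $\gamma(0)\neq\gamma(1)$, whose turning angle function $\theta$ satisfies $\theta(1)-\theta(0)=2\pi m$ with $0\neq m\in\mathbb{Z}$. Let $k\ge 2$ and $z_h\in Z_k$. Then there are no cuts $C\in D_k$ such that $r_{z_h,C}$ is closed, i.e. $r_{z_h,C}(0)\neq r_{z_h,C}(1)$ for all $C\in D_k$.
   Context: A turning angle function is a continuous $\theta$ with $\gamma'(s)=c(\cos\theta(s),\sin\theta(s))$. Concatenation $\alpha*\beta$ of two $C^1$ planar curves of the same constant speed ($\alpha$ on $[a_1,b_1]$, $\beta$ on $[a_2,b_2]$) is the curve on $[0,(b_1-a_1)+(b_2-a_2)]$ equal to $\alpha(s+a_1)$ for $s\le b_1-a_1$ and to $T(\beta(s-(b_1-a_1)+a_2))$ afterwards, where $T$ is the orientation-preserving rigid motion sending $\beta(a_2)$ to $\alpha(b_1)$ and the unit tangent of $\beta$ at $a_2$ to that of $\alpha$ at $b_1$; it is associative. Let $D_k=\{(c_1,\dots,c_{k-1})\in[0,1]^{k-1}: 0\le c_1\le\dots\le c_{k-1}\le 1\}$; set $c_0=0$, $c_k=1$. For $C\in D_k$ let $\gamma_i$ be the restriction of $\gamma$ to $[c_{i-1},c_i]$ (a degenerate arc is a point carrying the tangent direction of $\gamma$ there). For $\sigma\in S_k$, $r_{\sigma,C}:=\gamma_{\sigma(1)}*\dots*\gamma_{\sigma(k)}$ parametrized over $[0,1]$. $Z_k=\{z_0,\dots,z_{k-1}\}$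 with $z_h(i)=i+h$ if $i\le k-h$ and $z_h(i)=i+h-k$ if $i>k-h$. *)

(* Defs.v *)
From Stdlib Require Import Reals List.
From Coquelicot Require Import Coquelicot.
Import ListNotations.
Open Scope R_scope.

Definition deriv_within01 (f : R -> R) (s l : R) : Prop :=
  limit1_in (fun h => (f (s + h) - f s) / h)
            (fun h => h <> 0 /\ 0 <= s + h <= 1) l 0.

Definition cont_within01 (f : R -> R) (x : R) : Prop :=
  limit1_in f (fun y => 0 <= y <= 1) (f x) x.

(* theta is a turning angle function of the constant-speed-c curve gamma on [0,1]:
   theta continuous and gamma'(s) = c (cos theta(s), sin theta(s)) on [0,1].
   (This makes gamma C^1 on [0,1] with constant speed c.) *)
Definition turning_angle (gamma : R -> C) (c : R) (theta : R -> R) : Prop :=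
  (forall x, 0 <= x <= 1 -> cont_within01 theta x) /\
  (forall s, 0 <= s <= 1 ->
     deriv_within01 (fun t => fst (gamma t)) s (c * cos (theta s)) /\
     deriv_within01 (fun t => snd (gamma t)) s (c * sin (theta s))).

Definition unitC (t : R) : C := (cos t, sin t).

(* A curve piece: parameter interval [0, plen], map pf, unit tangent at the start
   (ptan0) and at the end (ptan1).  Degenerate pieces (plen = 0) carry tangents. *)
Record piece := Piece { plen : R; pf : R -> C; ptan0 : C; ptan1 : C }.

(* Concatenation alpha * beta: beta is moved by the orientation-preserving rigid motion
   T x = alpha(end) + (u1/v0) (x - beta(start)), sending beta(start) to alpha(end) and
   the (unit) start tangent v0 of beta to the (unit) end tangent u1 of alpha. *)
Definition concat (a b : piece) : piece :=
  let rot := Cdiv (ptan1 a) (ptan0 b) in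
  Piece (plen a + plen b)
        (fun s => if Rle_dec s (plen a) then pf a s
                  else Cplus (pf a (plen a))
                             (Cmult rot (Cminus (pf b (s - plen a)) (pf b 0))))
        (ptan0 a)
        (Cmult rot (ptan1 b)).

(* gamma_i : restriction of gamma to [cut (i-1), cut i] (i is 1-based),
   shifted to start at parameter 0. *)
Definition arc (gamma : R -> C) (theta : R -> R) (cut : nat -> R) (i : nat) : piece :=
  Piece (cut i - cut (i - 1)%nat)
        (fun s => gamma (s + cut (i - 1)%nat))
        (unitC (theta (cut (i - 1)%nat)))
        (unitC (theta (cut i))).

(* r_{sigma,C} = gamma_{sigma 1} * ... * gamma_{sigma k} (concatenation is associative;
   we bracket to the left), reparametrized linearly over [0,1]. *)
Definition r_piece (gamma : R -> C) (theta : R -> R) (cut : nat -> R)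
    (k : nat) (sigma : nat -> nat) : piece :=
  fold_left concat (map (fun i => arc gamma theta cut (sigma i)) (seq 2 (k - 1)))
            (arc gamma theta cut (sigma 1%nat)).

Definition r_curve (gamma : R -> C) (theta : R -> R) (cut : nat -> R)
    (k : nat) (sigma : nat -> nat) : R -> C :=
  let p := r_piece gamma theta cut k sigma in fun s => pf p (plen p * s).

Definition zshift (k h : nat) (i : nat) : nat :=
  if (i <=? k - h)%nat then (i + h)%nat else (i + h - k)%nat.

Definition in_Dk (k : nat) (cut : nat -> R) : Prop :=
  cut 0%nat = 0 /\ cut k = 1 /\ (forall i, (i < k)%nat -> cut i <= cut (S i)).

(* Main.v *)
Require Import Defs.
From Stdlib Require Import Reals ZArith Lia Lra List.
From Coquelicot Require Import Coquelicot.
Import ListNotations.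
Open Scope R_scope.

Lemma cos_sin_periodZ (x : R) (m : Z) :
  cos (x + 2 * PI * IZR m) = cos x /\ sin (x + 2 * PI * IZR m) = sin x.
Proof.
  destruct m as [|p|p].
  - rewrite Rmult_0_r, Rplus_0_r. auto.
  - replace (IZR (Z.pos p)) with (INR (Pos.to_nat p)).
    2:{ rewrite INR_IZR_INZ, positive_nat_Z. reflexivity. }
    replace (x + 2 * PI * INR (Pos.to_nat p)) with (x + 2 * INR (Pos.to_nat p) * PI) by ring.
    split; [apply cos_period | apply sin_period].
  - replace (IZR (Z.neg p)) with (- INR (Pos.to_nat p)).
    2:{ rewrite INR_IZR_INZ, positive_nat_Z. rewrite <- Pos2Z.opp_pos, opp_IZR. reflexivity. }
    set (y := x + 2 * PI * - INR (Pos.to_nat p)).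
    assert (Ex : x = y + 2 * INR (Pos.to_nat p) * PI) by (unfold y; ring).
    clearbody y. rewrite Ex. rewrite cos_period, sin_period. auto.
Qed.

Lemma unitC_nz (t : R) : unitC t <> 0%C.
Proof.
  unfold unitC. intro H. injection H. intros H1 H2.
  apply (cos_sin_0 t). auto.
Qed.

Section S.
Variables (gamma : R -> C) (theta : R -> R) (cut : nat -> R) (k : nat).
Hypothesis mono : forall i, (i < k)%nat -> cut i <= cut (S i).



Lemma concat_arc (p : piece) (j : nat) :
  (j < k)%nat -> 0 <= plen p -> ptan1 p = unitC (theta (cut j)) ->
  let q := Defs.concat p (arc gamma theta cut (S j)) in
  0 <= plen q /\ pf q 0 = pf p 0 /\
  pf q (plen q) = Cplus (pf p (plen p)) (Cminus (gamma (cut (S j))) (gamma (cut j))) /\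
  ptan1 q = unitC (theta (cut (S j))).
Proof.
  intros Hj Hp Ht. simpl.
  unfold arc; simpl.
  replace (j - 0)%nat with j by lia.
  pose proof (mono j Hj) as Hm.
  assert (Hrot : Cdiv (ptan1 p) (unitC (theta (cut j))) = 1%C).
  { rewrite Ht. unfold Cdiv. apply Cinv_r. apply unitC_nz. }
  rewrite Hrot.
  split; [lra|]. split.
  { destruct (Rle_dec 0 (plen p)); [reflexivity | lra]. }
  split.
  - destruct (Rle_dec (plen p + (cut (S j) - cut j)) (plen p)) as [H|H].
    + assert (E : cut (S j) = cut j) by lra. rewrite E.
      replace (plen p + (cut j - cut j)) with (plen p) by ring.
      destruct (pf p (plen p)), (gamma (cut j)).
      unfold Cplus, Cminus, Copp, Cplus; simpl. f_equal; ring.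
    + replace (plen p + (cut (S j) - cut j) - plen p + cut j) with (cut (S j)) by ring.
      rewrite Rplus_0_l. ring.
  - apply Cmult_1_l.
Qed.

Lemma run (n j : nat) (p : piece) :
  (j + n <= k)%nat -> 0 <= plen p -> ptan1 p = unitC (theta (cut j)) ->
  let q := fold_left Defs.concat (map (arc gamma theta cut) (seq (S j) n)) p in
  0 <= plen q /\ pf q 0 = pf p 0 /\
  pf q (plen q) = Cplus (pf p (plen p)) (Cminus (gamma (cut (j + n))) (gamma (cut j))) /\
  ptan1 q = unitC (theta (cut (j + n))).
Proof.
  revert j p. induction n as [|n IH]; intros j p Hjn Hp Ht; simpl.
  - rewrite Nat.add_0_r. split; [lra|]. split; [reflexivity|]. split; [|exact Ht].
    ring.
  - destruct (concat_arc p j ltac:(lia) Hp Ht) as [H1 [H2 [H3 H4]]].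
    destruct (IH (S j) (Defs.concat p (arc gamma theta cut (S j))) ltac:(lia) H1 H4) as [G1 [G2 [G3 G4]]].
    replace (j + S n)%nat with (S j + n)%nat by lia.
    split; [exact G1|]. split; [congruence|]. split; [|exact G4].
    rewrite G3, H3. ring.
Qed.
End S.

Lemma map_shift (f g : nat -> piece) (n s s' : nat) :
  (forall t, (t < n)%nat -> f (s + t)%nat = g (s' + t)%nat) ->
  map f (seq s n) = map g (seq s' n).
Proof.
  revert s s'. induction n as [|n IH]; intros s s' H; simpl; [reflexivity|].
  f_equal.
  - specialize (H 0%nat ltac:(lia)). rewrite !Nat.add_0_r in H. exact H.
  - apply IH. intros t Ht. specialize (H (S t) ltac:(lia)).
    rewrite !Nat.add_succ_r in H. rewrite !Nat.add_succ_l. exact H.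
Qed.

Theorem lemma4p2 (gamma : R -> C) (c : R) (theta : R -> R) (m : Z) (k h : nat) :
  0 < c ->
  turning_angle gamma c theta ->
  gamma 0 <> gamma 1 ->
  theta 1 - theta 0 = 2 * PI * IZR m ->
  m <> 0%Z ->
  (2 <= k)%nat ->
  (h < k)%nat ->
  forall cut : nat -> R, in_Dk k cut ->
    r_curve gamma theta cut k (zshift k h) 0 <> r_curve gamma theta cut k (zshift k h) 1.
Proof.
  intros Hc _ Hg Hth _ Hk Hh cut [H0 [H1 Hmono]].
  unfold r_curve, r_piece. rewrite Rmult_0_r, Rmult_1_r.
  assert (Z1 : zshift k h 1 = S h).
  { unfold zshift. replace (1 <=? k - h)%nat with true. lia.
    symmetry. apply Nat.leb_le. lia. }
  rewrite Z1.
  replace (k - 1)%nat with ((k - h - 1) + h)%nat by lia.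
  rewrite seq_app, map_app, fold_left_app.
  rewrite (map_shift _ (arc gamma theta cut) (k - h - 1) 2 (S (S h))).
  2:{ intros t Ht. unfold zshift.
      replace (2 + t <=? k - h)%nat with true. f_equal. lia.
      symmetry. apply Nat.leb_le. lia. }
  rewrite (map_shift _ (arc gamma theta cut) h (2 + (k - h - 1)) 1).
  2:{ intros t Ht. unfold zshift.
      replace (2 + (k - h - 1) + t <=? k - h)%nat with false. f_equal. lia.
      symmetry. apply Nat.leb_gt. lia. }
  set (p0 := arc gamma theta cut (S h)).
  assert (Hp0 : 0 <= plen p0).
  { unfold p0, arc; simpl. replace (h - 0)%nat with h by lia.
    pose proof (Hmono h ltac:(lia)). lra. }
  destruct (run gamma theta cut k Hmono (k - h - 1) (S h) p0 ltac:(lia) Hp0 eq_refl)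
    as [A1 [A2 [A3 A4]]].
  set (q1 := fold_left Defs.concat (map (arc gamma theta cut) (seq (S (S h)) (k - h - 1))) p0) in *.
  replace (S h + (k - h - 1))%nat with k in A3, A4 by lia.
  assert (T : ptan1 q1 = unitC (theta (cut 0%nat))).
  { rewrite A4, H1, H0. unfold unitC.
    replace (theta 1) with (theta 0 + 2 * PI * IZR m) by lra.
    destruct (cos_sin_periodZ (theta 0) m) as [E1 E2]. rewrite E1, E2. reflexivity. }
  destruct (run gamma theta cut k Hmono h 0%nat q1 ltac:(lia) A1 T) as [B1 [B2 [B3 B4]]].
  rewrite B2, B3, A2, A3. simpl (0 + h)%nat.
  unfold p0, arc; simpl. replace (h - 0)%nat with h by lia.
  rewrite H1, H0.
  replace (cut (S h) - cut h + cut h) with (cut (S h)) by ring.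
  rewrite Rplus_0_l.
  intro E. apply Hg.
  destruct (gamma (cut h)) as [a1 a2], (gamma (cut (S h))) as [b1 b2],
    (gamma 0) as [c1 c2], (gamma 1) as [d1 d2].
  unfold Cplus, Cminus, Copp in E; simpl in E. injection E. intros. f_equal; lra.
Qed.
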